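(* Let $\alpha\in(0,1)$ and $\nu\in\mathbb{N}$ with $2\nu>1/(1-\alpha)$, and let $K_{\alpha,\nu}(x)=\sum_{k=0}^{\infty}2^{-2\alpha\nu k}\phi(2^{2\nu k}x)$, where $\phi$ is the $2$-periodic function with $\phi(x)=|x|$ on $[-1,1]$. Then for every $x\in\mathbb{R}$ and every $\beta\in(\alpha,1]$, \[ \limsup_{t\to0}\frac{|K_{\alpha,\nu}(x+t)-K_{\alpha,\nu}(x)|}{|t|^{\beta}}=+\infty; \] hence $K_{\alpha,\nu}$ is at no point pointwise H\''older continuous of order $\beta$, and in particular (case $\beta=1$) $K_{\alpha,\nu}$ is differentiable at no point of $\mathbb{R}$. Moreover, for every $M\ge1$, \[ \limsup_{t\to0}\frac{1}{2M}\int_{-M}^{M}\left|\frac{K_{\alpha,\nu}(x+t)-K_{\alpha,\nu}(x)}{t}\right|dx=+\infty, \] so the difference quotients of $K_{\alpha,\nu}$ are unbounded in $L^1_{loc}(\mathbb{R})$ and the distributional derivative of $K_{\alpha,\nu}$ is not a signed (Radon) measure, i.e. $K_{\alpha,\nu}$ is not of locally bounded variation.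
   Context: A function $f\in C^0(\mathbb{R})$ is called (pointwise) H\''older continuous of order $\beta$ at $x$ if there exist $r,C>0$ with $|f(y)-f(x)|\le C|y-x|^{\beta}$ for all $y\in[x-r,x+r]$. *)

(* Defs.v *)
From Stdlib Require Import Reals Lra List Sorted.
From Coquelicot Require Import Coquelicot.
Open Scope R_scope.

(* phi : the 2-periodic function with phi x = |x| on [-1,1],
   i.e. the distance from x to the nearest even integer.
   Int_part is the floor function. *)
Definition phi (x : R) : R := Rabs (x - 2 * IZR (Int_part ((x + 1) / 2))).

Definition K (alpha : R) (nu : nat) (x : R) : R :=
  Series (fun k : nat =>
    Rpower 2 (- (2 * alpha * INR nu * INR k)) * phi (2 ^ (2 * nu * k) * x)).

(* |t|^beta, with 0^beta = 0 (beta > 0 throughout) *)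
Definition abs_pow (t beta : R) : R :=
  if Req_EM_T t 0 then 0 else Rpower (Rabs t) beta.

Definition holder_at (f : R -> R) (x beta : R) : Prop :=
  exists r C, 0 < r /\ 0 < C /\
    forall y, x - r <= y <= x + r -> Rabs (f y - f x) <= C * abs_pow (y - x) beta.

Definition limsup_at0_pinfty (g : R -> R) : Prop :=
  forall C r, 0 < r -> exists t, 0 < Rabs t < r /\ C < g t.

Fixpoint var_sum (f : R -> R) (l : list R) : R :=
  match l with
  | x :: ((y :: _) as t) => Rabs (f y - f x) + var_sum f t
  | _ => 0
  end.

Definition bounded_variation (f : R -> R) (a b : R) : Prop :=
  exists V, forall l : list R,
    (forall x, In x l -> a <= x <= b) -> Sorted Rle l -> var_sum f l <= V.

Definition locally_BV (f : R -> R) : Prop :=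
  forall a b, a < b -> bounded_variation f a b.

(* Main.v *)
Require Import Defs.
From Stdlib Require Import Reals Lra Lia ZArith List Sorted.
From Coquelicot Require Import Coquelicot.
Open Scope R_scope.

Lemma phi_E y p : Rabs (y - 2 * IZR p) <= 1 -> phi y = Rabs (y - 2 * IZR p).
Proof.
  intros H. unfold phi. set (q := Int_part ((y + 1) / 2)).
  destruct (base_Int_part ((y+1)/2)) as [H1 H2]. fold q in H1, H2. clearbody q.
  apply Rabs_le_between in H.
  assert (A : IZR (q - p) <= 1) by (rewrite minus_IZR; lra).
  assert (B : IZR (q - p) > -1) by (rewrite minus_IZR; lra).
  apply le_IZR in A. apply Rgt_lt, lt_IZR in B.
  assert (q = p \/ q = p + 1)%Z as [E|E] by lia.
  - rewrite E; reflexivity.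
  - rewrite E, plus_IZR in *.
    assert (y = 2 * IZR p + 1) by lra. subst y.
    rewrite Rabs_left, Rabs_right; lra.
Qed.

Lemma phi_q y : Rabs (y - 2 * IZR (Int_part ((y + 1) / 2))) <= 1.
Proof.
  destruct (base_Int_part ((y+1)/2)) as [H1 H2].
  apply Rabs_le; lra.
Qed.

Lemma phi_le y p : phi y <= Rabs (y - 2 * IZR p).
Proof.
  destruct (Rle_lt_dec 1 (Rabs (y - 2 * IZR p))).
  - pose proof (phi_q y). unfold phi. lra.
  - rewrite (phi_E y p); lra.
Qed.

Lemma phi_bnd y : 0 <= phi y <= 1.
Proof. split. unfold phi; apply Rabs_pos. apply phi_q. Qed.

Lemma phi_lip x y : Rabs (phi x - phi y) <= Rabs (x - y).
Proof.
  assert (forall x y, phi x - phi y <= Rabs (x - y)).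
  { clear. intros x y. pose proof (phi_le x (Int_part ((y + 1) / 2))).
    assert (phi y = Rabs (y - 2 * IZR (Int_part ((y + 1) / 2)))) by reflexivity.
    pose proof (Rabs_triang (x - y) (y - 2 * IZR (Int_part ((y + 1) / 2)))).
    replace (x - y + (y - 2 * IZR (Int_part ((y + 1) / 2)))) with
      (x - 2 * IZR (Int_part ((y + 1) / 2))) in H1 by ring. lra. }
  apply Rabs_le. pose proof (H x y). pose proof (H y x).
  rewrite Rabs_minus_sym in H1. lra.
Qed.

Lemma phi_per y m : phi (y + 2 * IZR m) = phi y.
Proof.
  pose proof (phi_q y). set (q := Int_part ((y + 1) / 2)) in *.
  rewrite (phi_E (y + 2 * IZR m) (q + m)).
  - rewrite plus_IZR. unfold phi. fold q. f_equal. ring.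
  - rewrite plus_IZR. replace (y + 2 * IZR m - 2 * (IZR q + IZR m)) with (y - 2 * IZR q) by ring. lra.
Qed.

Lemma phi_lin m y z : IZR m <= y <= IZR m + 1 -> IZR m <= z <= IZR m + 1 ->
  Rabs (phi y - phi z) = Rabs (y - z).
Proof.
  intros Hy Hz. destruct (Zeven_odd_dec m) as [He|Ho].
  - apply Zeven_ex in He as [p Hp]. subst m. rewrite mult_IZR in *.
    rewrite (phi_E y p), (phi_E z p) by (apply Rabs_le; lra).
    rewrite (Rabs_right (y - _)), (Rabs_right (z - _)) by lra. f_equal; ring.
  - apply Zodd_ex in Ho as [p Hp]. subst m. rewrite plus_IZR, mult_IZR in *.
    rewrite (phi_E y (p+1)), (phi_E z (p+1)) by (rewrite plus_IZR; apply Rabs_le; lra).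
    rewrite plus_IZR.
    rewrite (Rabs_left1 (y - _)), (Rabs_left1 (z - _)) by lra.
    rewrite Rabs_minus_sym. f_equal; ring.
Qed.
Definition aa (al : R) (nu : nat) := Rpower 2 (-(2*al*INR nu)).
Definition bb (nu : nat) := 2 ^ (2 * nu).

Lemma Rpower_pos x y : 0 < Rpower x y.
Proof. unfold Rpower; apply exp_pos. Qed.

Lemma tm_eq al nu x k :
  Rpower 2 (- (2 * al * INR nu * INR k)) * phi (2 ^ (2 * nu * k) * x)
  = aa al nu ^ k * phi (bb nu ^ k * x).
Proof.
  unfold aa, bb. rewrite <- pow_mult. rewrite <- (Rpower_pow k (Rpower 2 _)) by apply Rpower_pos.
  rewrite Rpower_mult. f_equal. f_equal. ring.
Qed.

Lemma ex_tm al nu x : 0 < aa al nu < 1 ->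
  ex_series (fun k => Rpower 2 (- (2 * al * INR nu * INR k)) * phi (2 ^ (2 * nu * k) * x)).
Proof.
  intros Ha.
  apply (@ex_series_le R_AbsRing R_CompleteNormedModule) with (b := fun k => aa al nu ^ k).
  - intros k. rewrite tm_eq. unfold norm; simpl; unfold abs; simpl.
    pose proof (phi_bnd (bb nu ^ k * x)). pose proof (pow_lt (aa al nu) k ltac:(lra)).
    rewrite Rabs_right by nra. nra.
  - apply ex_series_geom. rewrite Rabs_right; lra.
Qed.

Lemma evn nu n k s : (1 <= nu)%nat ->
  bb nu ^ (n + S k) * (IZR s / (2 * bb nu ^ n)) = 2 * IZR (s * 2 ^ Z.of_nat (2*nu*S k - 2)).
Proof.
  intros Hnu. rewrite mult_IZR, <- pow_IZR. unfold bb. rewrite <- !pow_mult.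
  replace (2*nu*(n + S k))%nat with (2*nu*n + S (S (2*nu*S k -2)))%nat by nia.
  set (p := (2*nu*S k -2)%nat). set (q := (2*nu*n)%nat).
  rewrite pow_add. simpl (2 ^ S (S _)). pose proof (pow_lt 2 q ltac:(lra)). field. lra.
Qed.

Lemma KD al nu x s n : 0 < aa al nu < 1 -> (1 <= nu)%nat ->
  K al nu (x + IZR s / (2 * bb nu ^ n)) - K al nu x =
  sum_f_R0 (fun k => aa al nu ^ k * (phi (bb nu ^ k * (x + IZR s / (2 * bb nu ^ n))) - phi (bb nu ^ k * x))) n.
Proof.
  intros Ha Hnu. unfold K. rewrite <- Series_minus by apply ex_tm, Ha.
  rewrite (Series_incr_n _ (S n)).
  2: lia.
  2: apply (ex_series_minus _ _ (ex_tm _ _ _ Ha) (ex_tm _ _ _ Ha)).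
  simpl pred.
  rewrite (Series_ext _ (fun _ => 0 * 0)).
  - rewrite Series_scal_l, Rmult_0_l, Rplus_0_r. apply sum_eq. intros i _.
    rewrite !tm_eq. ring.
  - intros k. rewrite !tm_eq. replace (S n + k)%nat with (n + S k)%nat by lia.
    rewrite Rmult_plus_distr_l, (evn nu n k s Hnu), phi_per. ring.
Qed.

Lemma Gsum r n : 1 < r -> sum_f_R0 (fun k => r ^ k) n <= r ^ (S n) / (r - 1).
Proof.
  intros Hr. induction n as [|n IH]; simpl.
  - rewrite Rmult_1_r. apply (Rmult_le_reg_r (r-1)); [lra|]. unfold Rdiv. rewrite Rmult_assoc, Rinv_l by lra. lra.
  - assert (r * r ^ n / (r - 1) + r * r ^ n = r * (r * r ^ n) / (r - 1)) by (field; lra).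
    simpl in IH. lra.
Qed.

Lemma LB a b x s n m : 0 < a -> 0 < b -> a * b > 2 -> (s = 1 \/ s = -1)%Z ->
  IZR m <= b ^ n * x <= IZR m + 1 -> IZR m <= b ^ n * x + IZR s / 2 <= IZR m + 1 ->
  a ^ n * (1/2 - 1/(2*(a*b - 1))) <=
  Rabs (sum_f_R0 (fun k => a ^ k * (phi (b ^ k * (x + IZR s / (2 * b ^ n))) - phi (b ^ k * x))) n).
Proof.
  intros Ha Hb Hab Hs H1 H2.
  set (h := IZR s / (2 * b ^ n)).
  set (d := fun k => a ^ k * (phi (b ^ k * (x + h)) - phi (b ^ k * x))).
  pose proof (pow_lt b n Hb) as Hbn. pose proof (pow_lt a n Ha) as Han.
  assert (Hh : Rabs h = / (2 * b ^ n)).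
  { unfold h. unfold Rdiv. rewrite Rabs_mult, Rabs_inv, (Rabs_right (2 * b ^ n)) by lra.
    destruct Hs as [-> | ->]; [rewrite Rabs_R1 | rewrite (Rabs_left (IZR (-1))) by lra]; lra. }
  assert (Hdn : Rabs (d n) = a ^ n * / 2).
  { unfold d. rewrite Rabs_mult, Rabs_right by lra. f_equal.
    replace (b ^ n * (x + h)) with (b ^ n * x + IZR s / 2) by (unfold h; field; lra).
    rewrite (phi_lin m) by lra.
    replace (b ^ n * x + IZR s / 2 - b ^ n * x) with (IZR s / 2) by ring.
    unfold Rdiv; rewrite Rabs_mult, Rabs_inv, (Rabs_right 2) by lra.
    destruct Hs as [-> | ->]; [rewrite Rabs_R1 | rewrite (Rabs_left (IZR (-1))) by lra]; lra. }
  assert (Hdk : forall k, Rabs (d k) <= (a * b) ^ k * Rabs h).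
  { intros k. unfold d. rewrite Rabs_mult, Rabs_right by (apply Rle_ge, pow_le; lra).
    rewrite Rpow_mult_distr, Rmult_assoc. apply Rmult_le_compat_l. apply pow_le; lra.
    eapply Rle_trans. apply phi_lip.
    replace (b ^ k * (x + h) - b ^ k * x) with (b ^ k * h) by ring.
    rewrite Rabs_mult, Rabs_right. lra. apply Rle_ge, pow_le; lra. }
  fold d.
  assert (Hc : 0 < 1 / (2 * (a * b - 1))) by (apply Rdiv_lt_0_compat; lra).
  destruct n as [|n].
  - change (sum_f_R0 d 0%nat) with (d 0%nat). rewrite Hdn. simpl. lra.
  - change (sum_f_R0 d (S n)) with (sum_f_R0 d n + d (S n)).
    assert (Hlow : Rabs (sum_f_R0 d n) <= a ^ S n * (1 / (2 * (a * b - 1)))).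
    { eapply Rle_trans. apply sum_f_R0_triangle.
      eapply Rle_trans. apply sum_Rle. intros k _. apply Hdk.
      rewrite <- scal_sum. eapply Rle_trans. apply Rmult_le_compat_l. apply Rabs_pos.
      apply (Gsum (a*b) n). lra.
      rewrite Hh, Rpow_mult_distr. apply Req_le. field. split; lra. }
    pose proof (Rabs_triang_inv (d (S n)) (- sum_f_R0 d n)).
    rewrite Rabs_Ropp in H. replace (d (S n) - - sum_f_R0 d n) with (sum_f_R0 d n + d (S n)) in H by ring.
    rewrite Hdn in H. lra.
Qed.

Lemma bb_R nu : bb nu = Rpower 2 (2 * INR nu).
Proof.
  unfold bb. rewrite <- Rpower_pow by lra. f_equal. rewrite mult_INR. simpl. ring.
Qed.

Lemma params al nu : 0 < al < 1 -> 2 * INR nu > 1 / (1 - al) ->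
  (1 <= nu)%nat /\ 0 < aa al nu < 1 /\ 1 < bb nu /\ aa al nu * bb nu > 2.
Proof.
  intros Ha Hn.
  assert (H1 : 0 < 1 / (1 - al)) by (apply Rdiv_lt_0_compat; lra).
  assert (Hnu : 0 < INR nu) by lra.
  assert (Hn1 : (1 <= nu)%nat) by (destruct nu; [simpl in Hnu; lra | lia]).
  split; [exact Hn1|]. split; [|split].
  - split. apply Rpower_pos. unfold aa. rewrite <- (Rpower_O 2) by lra. apply Rpower_lt; nra.
  - unfold bb. apply Rlt_pow_R1; [lra | lia].
  - unfold aa. rewrite bb_R, <- Rpower_plus. apply Rlt_gt, Rle_lt_trans with (Rpower 2 1); [rewrite Rpower_1; lra|].
    apply Rpower_lt. lra.
    assert (2 * INR nu * (1 - al) > 1).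
    { apply (Rmult_gt_compat_r (1 - al)) in Hn; [|lra].
      unfold Rdiv in Hn. rewrite Rmult_1_l, Rinv_l in Hn by lra. lra. }
    lra.
Qed.

Definition cc al nu := 1/2 - 1/(2*(aa al nu * bb nu - 1)).

Lemma cc_pos al nu : aa al nu * bb nu > 2 -> 0 < cc al nu.
Proof.
  intros H. unfold cc. assert (1/(2*(aa al nu * bb nu - 1)) < 1/2).
  { apply Rmult_lt_reg_r with (2*(aa al nu * bb nu - 1)). lra.
    unfold Rdiv. rewrite Rmult_assoc, Rinv_l by lra. lra. }
  lra.
Qed.

Lemma core al nu n x m s : 0 < al < 1 -> 2 * INR nu > 1 / (1 - al) -> (s = 1 \/ s = -1)%Z ->
  IZR m <= bb nu ^ n * x <= IZR m + 1 -> IZR m <= bb nu ^ n * x + IZR s / 2 <= IZR m + 1 ->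
  cc al nu * aa al nu ^ n <= Rabs (K al nu (x + IZR s / (2 * bb nu ^ n)) - K al nu x).
Proof.
  intros Ha Hn Hs H1 H2. destruct (params al nu Ha Hn) as (Hn1 & Haa & Hbb & Hab).
  rewrite KD by assumption. rewrite Rmult_comm. unfold cc.
  apply (LB (aa al nu) (bb nu) x s n m); try lra; auto.
Qed.

Lemma core_any al nu n x : 0 < al < 1 -> 2 * INR nu > 1 / (1 - al) ->
  exists s, (s = 1 \/ s = -1)%Z /\
  cc al nu * aa al nu ^ n <= Rabs (K al nu (x + IZR s / (2 * bb nu ^ n)) - K al nu x).
Proof.
  intros Ha Hn. set (m := Int_part (bb nu ^ n * x)).
  destruct (base_Int_part (bb nu ^ n * x)) as [A B]. fold m in A, B.
  destruct (Rle_lt_dec (bb nu ^ n * x) (IZR m + /2)).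
  - exists 1%Z. split. auto. apply (core _ _ _ _ m); auto; lra.
  - exists (-1)%Z. split. auto. apply (core _ _ _ _ m); auto; lra.
Qed.

Lemma big_pow q X : 1 < q -> exists N, forall n, (n >= N)%nat -> X <= q ^ n.
Proof.
  intros Hq. destruct (Pow_x_infinity q ltac:(rewrite Rabs_right; lra) X) as [N HN].
  exists N. intros n Hn. specialize (HN n Hn).
  rewrite Rabs_right in HN. lra. apply Rle_ge, pow_le; lra.
Qed.

Lemma small_t nu r : (1 <= nu)%nat -> 0 < r -> exists N, forall n, (n >= N)%nat ->
  / (2 * bb nu ^ n) < r.
Proof.
  intros Hnu Hr. assert (1 < bb nu) by (unfold bb; apply Rlt_pow_R1; [lra|lia]).
  destruct (big_pow (bb nu) (/ r) H) as [N HN]. exists N. intros n Hn.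
  specialize (HN n Hn). pose proof (Rinv_0_lt_compat r Hr). pose proof (pow_lt (bb nu) n ltac:(lra)).
  apply Rlt_le_trans with (/ bb nu ^ n). apply Rinv_lt_contravar. nra. lra.
  rewrite <- (Rinv_inv r). apply Rinv_le_contravar; lra.
Qed.

Lemma part1 al nu x beta : 0 < al < 1 -> 2 * INR nu > 1 / (1 - al) -> al < beta <= 1 ->
  limsup_at0_pinfty (fun t => Rabs (K al nu (x + t) - K al nu x) / Rpower (Rabs t) beta).
Proof.
  intros Ha Hn Hb C r Hr.
  destruct (params al nu Ha Hn) as (Hn1 & Haa & Hbb & Hab).
  pose proof (cc_pos al nu Hab) as Hc.
  set (q' := Rpower (bb nu) beta).
  assert (Hq : 1 < aa al nu * q').
  { unfold q', aa. rewrite bb_R, Rpower_mult, <- Rpower_plus, <- (Rpower_O 2) by lra.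
    apply Rpower_lt. lra. assert (0 < INR nu) by (apply lt_0_INR; lia). nra. }
  destruct (big_pow _ (C / cc al nu + 1) Hq) as [N1 HN1].
  destruct (small_t nu r Hn1 Hr) as [N2 HN2].
  destruct (core_any al nu (N1 + N2) x Ha Hn) as [s [Hs HK]].
  set (n := (N1 + N2)%nat) in *.
  specialize (HN1 n ltac:(lia)). specialize (HN2 n ltac:(lia)).
  pose proof (pow_lt (bb nu) n ltac:(lra)) as Hbn.
  assert (Ht : Rabs (IZR s / (2 * bb nu ^ n)) = / (2 * bb nu ^ n)).
  { unfold Rdiv. rewrite Rabs_mult, Rabs_inv, (Rabs_right (2 * bb nu ^ n)) by lra.
    destruct Hs as [-> | ->]; [rewrite Rabs_R1 | rewrite (Rabs_left (IZR (-1))) by lra]; lra. }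
  exists (IZR s / (2 * bb nu ^ n)). split.
  - rewrite Ht. split. apply Rinv_0_lt_compat; lra. exact HN2.
  - rewrite Ht.
    assert (HY : Rpower (/ (2 * bb nu ^ n)) beta <= / q' ^ n).
    { apply Rle_trans with (Rpower (/ bb nu ^ n) beta).
      apply Rle_Rpower_l. lra. split. apply Rinv_0_lt_compat; lra.
      apply Rinv_le_contravar; lra.
      unfold Rpower at 1. rewrite ln_Rinv by lra. rewrite <- Rpower_pow by lra.
      unfold q'. rewrite <- Rpower_pow by apply Rpower_pos.
      rewrite Rpower_mult, <- Rpower_Ropp. unfold Rpower. rewrite ln_exp.
      right. f_equal. ring. }
    set (Y := Rpower (/ (2 * bb nu ^ n)) beta) in *.
    assert (HY0 : 0 < Y) by apply Rpower_pos.
    assert (Hq'n : 0 < q' ^ n) by (apply pow_lt; apply Rpower_pos).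
    assert (HiY : q' ^ n <= / Y).
    { rewrite <- (Rinv_inv (q' ^ n)). apply Rinv_le_contravar; auto. }
    assert (cc al nu * aa al nu ^ n * q' ^ n <= Rabs (K al nu (x + IZR s / (2 * bb nu ^ n)) - K al nu x) / Y).
    { unfold Rdiv. apply Rmult_le_compat; auto.
      apply Rmult_le_pos; [lra| apply pow_le; lra]. lra. }
    rewrite Rmult_assoc, <- Rpow_mult_distr in H.
    assert (cc al nu * (C / cc al nu + 1) <= cc al nu * (aa al nu * q') ^ n) by (apply Rmult_le_compat_l; lra).
    assert (cc al nu * (C / cc al nu + 1) = C + cc al nu) by (field; lra).
    lra.
Qed.

Lemma part2 al nu x beta : 0 < al < 1 -> 2 * INR nu > 1 / (1 - al) -> al < beta <= 1 ->
  ~ holder_at (K al nu) x beta.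
Proof.
  intros Ha Hn Hb [r [C [Hr [HC H]]]].
  destruct (part1 al nu x beta Ha Hn Hb C r Hr) as [t [Ht Hlt]].
  specialize (H (x + t)). replace (x + t - x) with t in H by ring.
  assert (t <> 0) by (intro E; subst; rewrite Rabs_R0 in Ht; lra).
  unfold abs_pow in H. destruct (Req_EM_T t 0); [contradiction|].
  assert (x - r <= x + t <= x + r) by (destruct Ht as [_ Ht]; apply Rabs_lt_between in Ht; lra).
  specialize (H H1). pose proof (Rpower_pos (Rabs t) beta).
  apply (Rmult_lt_compat_r (Rpower (Rabs t) beta)) in Hlt; auto.
  unfold Rdiv in Hlt. rewrite Rmult_assoc, Rinv_l in Hlt by lra. lra.
Qed.

Lemma part3 al nu x : 0 < al < 1 -> 2 * INR nu > 1 / (1 - al) -> ~ ex_derive (K al nu) x.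
Proof.
  intros Ha Hn Hd. apply Derive_correct in Hd. apply is_derive_Reals in Hd.
  set (l := Derive (K al nu) x) in *.
  destruct (Hd 1 ltac:(lra)) as [[d Hdp] Hdel].
  destruct (part1 al nu x 1 Ha Hn ltac:(lra) (Rabs l + 1) d Hdp) as [t [Ht Hlt]].
  assert (t <> 0) by (intro E; subst; rewrite Rabs_R0 in Ht; lra).
  specialize (Hdel t H ltac:(simpl; lra)).
  rewrite Rpower_1 in Hlt by lra.
  assert (Rabs ((K al nu (x + t) - K al nu x) / t) < Rabs l + 1).
  { pose proof (Rabs_triang_inv ((K al nu (x + t) - K al nu x) / t) l). lra. }
  unfold Rdiv in H0. rewrite Rabs_mult, Rabs_inv in H0. unfold Rdiv in Hlt. lra.
Qed.

Lemma var_sum_cons2 f x y t : var_sum f (x :: y :: t) = Rabs (f y - f x) + var_sum f (y :: t).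
Proof. reflexivity. Qed.

Lemma sorted_map_seq (f : nat -> R) : (forall i, f i <= f (S i)) ->
  forall L s, Sorted Rle (map f (seq s L)).
Proof.
  intros Hf L. induction L as [|L IH]; intros s; simpl.
  - constructor.
  - constructor. apply IH. destruct L; simpl; constructor. apply Hf.
Qed.

Lemma bbn_nat nu n : bb nu ^ n = INR (2 ^ (2 * nu * n)).
Proof. rewrite pow_INR. unfold bb. rewrite <- pow_mult. simpl INR. try (f_equal; ring). Qed.

Lemma cell_bound al nu n (i : nat) : 0 < al < 1 -> 2 * INR nu > 1 / (1 - al) ->
  cc al nu * aa al nu ^ n <=
  Rabs (K al nu (INR (S (2 * i)) * (IZR 1 / (2 * bb nu ^ n))) - K al nu (INR (2 * i) * (IZR 1 / (2 * bb nu ^ n)))).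
Proof.
  intros Ha Hn. destruct (params al nu Ha Hn) as (Hn1 & Haa & Hbb & Hab).
  pose proof (pow_lt (bb nu) n ltac:(lra)) as Hbn.
  assert (E : INR (S (2 * i)) * (IZR 1 / (2 * bb nu ^ n)) =
     INR (2 * i) * (IZR 1 / (2 * bb nu ^ n)) + IZR 1 / (2 * bb nu ^ n)) by (rewrite S_INR; ring).
  rewrite E. apply (core _ _ _ _ (Z.of_nat i)); auto.
  - rewrite <- INR_IZR_INZ.
    replace (bb nu ^ n * (INR (2 * i) * (IZR 1 / (2 * bb nu ^ n)))) with (INR i)
      by (rewrite mult_INR; simpl INR; field; lra). lra.
  - rewrite <- INR_IZR_INZ.
    replace (bb nu ^ n * (INR (2 * i) * (IZR 1 / (2 * bb nu ^ n)))) with (INR i)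
      by (rewrite mult_INR; simpl INR; field; lra). lra.
Qed.

Lemma var_bound al nu n : 0 < al < 1 -> 2 * INR nu > 1 / (1 - al) ->
  forall L i, INR L * (cc al nu * aa al nu ^ n) <=
  var_sum (K al nu) (map (fun j => INR j * (IZR 1 / (2 * bb nu ^ n))) (seq (2 * i) (2 * L + 1))).
Proof.
  intros Ha Hn L. induction L as [|L IH]; intros i.
  - simpl. lra.
  - replace (2 * S L + 1)%nat with (S (S (2 * L + 1))) by lia.
    cbn [seq map].
    replace (S (S (2 * i))) with (2 * S i)%nat by lia.
    specialize (IH (S i)).
    destruct (2 * L + 1)%nat as [|k] eqn:Ek; [lia|].
    cbn [seq map] in IH |- *.
    rewrite !var_sum_cons2.
    pose proof (cell_bound al nu n i Ha Hn).
    pose proof (Rabs_pos (K al nu (INR (2 * S i) * (IZR 1 / (2 * bb nu ^ n))) -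
      K al nu (INR (S (2 * i)) * (IZR 1 / (2 * bb nu ^ n))))).
    rewrite S_INR. lra.
Qed.

Lemma part5 al nu : 0 < al < 1 -> 2 * INR nu > 1 / (1 - al) -> ~ locally_BV (K al nu).
Proof.
  intros Ha Hn HBV. destruct (HBV 0 1 ltac:(lra)) as [V HV].
  destruct (params al nu Ha Hn) as (Hn1 & Haa & Hbb & Hab).
  pose proof (cc_pos al nu Hab) as Hc.
  destruct (big_pow (aa al nu * bb nu) (V / cc al nu + 1) ltac:(lra)) as [n Hnn].
  specialize (Hnn n (le_n _)).
  set (NB := (2 ^ (2 * nu * n))%nat).
  pose proof (pow_lt (bb nu) n ltac:(lra)) as Hbn.
  assert (HNB : INR NB = bb nu ^ n) by (unfold NB; rewrite bbn_nat; reflexivity).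
  set (l := map (fun j => INR j * (IZR 1 / (2 * bb nu ^ n))) (seq (2 * 0) (2 * NB + 1))).
  assert (H1 : var_sum (K al nu) l <= V).
  { apply HV.
    - intros y Hy. unfold l in Hy. apply in_map_iff in Hy as [j [Hj Hin]].
      apply in_seq in Hin. subst y. split.
      + apply Rmult_le_pos. apply pos_INR. unfold Rdiv. rewrite Rmult_1_l. apply Rlt_le, Rinv_0_lt_compat. lra.
      + assert (INR j <= 2 * INR NB).
        { replace 2 with (INR 2) by (simpl; ring). rewrite <- mult_INR. apply le_INR. lia. }
        rewrite HNB in H. apply (Rmult_le_reg_r (2 * bb nu ^ n)). lra.
        unfold Rdiv. rewrite Rmult_assoc, Rmult_assoc, Rinv_l by lra. lra.
    - apply sorted_map_seq. intros i. rewrite S_INR.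
      assert (0 <= IZR 1 / (2 * bb nu ^ n)) by (unfold Rdiv; rewrite Rmult_1_l; apply Rlt_le, Rinv_0_lt_compat; lra).
      lra. }
  pose proof (var_bound al nu n Ha Hn NB 0). fold l in H.
  rewrite HNB in H.
  assert (cc al nu * (V / cc al nu + 1) <= cc al nu * (aa al nu * bb nu) ^ n) by (apply Rmult_le_compat_l; lra).
  assert (cc al nu * (V / cc al nu + 1) = V + cc al nu) by (field; lra).
  rewrite Rpow_mult_distr in H0. lra.
Qed.

Lemma lip_ex_RInt (f : R -> R) L : (forall x y, Rabs (f x - f y) <= L * Rabs (x - y)) ->
  forall u v, ex_RInt f u v.
Proof.
  intros Hf u v. apply (@ex_RInt_continuous R_CompleteNormedModule). intros z _.
  apply continuity_pt_filterlim.
  unfold continuity_pt, continue_in, limit1_in, limit_in. intros eps Heps.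
  assert (HL : 0 < Rabs L + 1) by (pose proof (Rabs_pos L); lra).
  exists (eps / (Rabs L + 1)). split. apply Rdiv_lt_0_compat; lra.
  intros y [_ Hy]. simpl in *. unfold R_dist in *.
  eapply Rle_lt_trans. apply Hf.
  apply Rle_lt_trans with ((Rabs L + 1) * Rabs (y - z)).
  apply Rmult_le_compat_r. apply Rabs_pos. pose proof (Rle_abs L); lra.
  apply (Rmult_lt_compat_l (Rabs L + 1)) in Hy; auto.
  replace ((Rabs L + 1) * (eps / (Rabs L + 1))) with eps in Hy by (field; lra). exact Hy.
Qed.

Lemma sum_lip (G : nat -> R -> R) (Lk : nat -> R) n :
  (forall k x y, Rabs (G k x - G k y) <= Lk k * Rabs (x - y)) ->
  forall x y, Rabs (sum_f_R0 (fun k => G k x) n - sum_f_R0 (fun k => G k y) n) <= sum_f_R0 Lk n * Rabs (x - y).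
Proof.
  intros HG x y. induction n as [|n IH]; simpl.
  - apply HG.
  - replace (sum_f_R0 (fun k : nat => G k x) n + G (S n) x - (sum_f_R0 (fun k : nat => G k y) n + G (S n) y))
      with ((sum_f_R0 (fun k : nat => G k x) n - sum_f_R0 (fun k : nat => G k y) n) + (G (S n) x - G (S n) y)) by ring.
    eapply Rle_trans. apply Rabs_triang. pose proof (HG (S n) x y). lra.
Qed.

Lemma g_lip al nu n : 0 < al < 1 -> 2 * INR nu > 1 / (1 - al) ->
  exists L, forall x y,
  Rabs (Rabs ((K al nu (x + IZR 1 / (2 * bb nu ^ n)) - K al nu x) / (IZR 1 / (2 * bb nu ^ n))) -
        Rabs ((K al nu (y + IZR 1 / (2 * bb nu ^ n)) - K al nu y) / (IZR 1 / (2 * bb nu ^ n))))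
  <= L * Rabs (x - y).
Proof.
  intros Ha Hn. destruct (params al nu Ha Hn) as (Hn1 & Haa & Hbb & Hab).
  set (t := IZR 1 / (2 * bb nu ^ n)).
  pose proof (pow_lt (bb nu) n ltac:(lra)) as Hbn.
  assert (Ht : 0 < t) by (unfold t; apply Rdiv_lt_0_compat; lra).
  set (G := fun k x => aa al nu ^ k * (phi (bb nu ^ k * (x + t)) - phi (bb nu ^ k * x))).
  set (Lk := fun k : nat => aa al nu ^ k * (2 * bb nu ^ k)).
  assert (HG : forall k x y, Rabs (G k x - G k y) <= Lk k * Rabs (x - y)).
  { intros k x y. unfold G, Lk.
    pose proof (pow_lt (aa al nu) k ltac:(lra)). pose proof (pow_lt (bb nu) k ltac:(lra)).
    rewrite <- Rmult_minus_distr_l, Rabs_mult, (Rabs_right (aa al nu ^ k)) by lra.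
    rewrite Rmult_assoc. apply Rmult_le_compat_l. lra.
    pose proof (phi_lip (bb nu ^ k * (x + t)) (bb nu ^ k * (y + t))).
    pose proof (phi_lip (bb nu ^ k * x) (bb nu ^ k * y)).
    replace (bb nu ^ k * (x + t) - bb nu ^ k * (y + t)) with (bb nu ^ k * (x - y)) in H1 by ring.
    replace (bb nu ^ k * x - bb nu ^ k * y) with (bb nu ^ k * (x - y)) in H2 by ring.
    rewrite Rabs_mult, (Rabs_right (bb nu ^ k)) in H1, H2 by lra.
    eapply Rle_trans.
    replace (phi (bb nu ^ k * (x + t)) - phi (bb nu ^ k * x) - (phi (bb nu ^ k * (y + t)) - phi (bb nu ^ k * y)))
      with ((phi (bb nu ^ k * (x + t)) - phi (bb nu ^ k * (y + t))) - (phi (bb nu ^ k * x) - phi (bb nu ^ k * y))) by ring.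
    apply Rabs_triang. rewrite Rabs_Ropp. lra. }
  exists (sum_f_R0 Lk n * / t). intros x y.
  assert (HKD : forall z, K al nu (z + t) - K al nu z = sum_f_R0 (fun k => G k z) n).
  { intros z. unfold G, t. apply KD; [lra|exact Hn1]. }
  rewrite !HKD.
  pose proof (sum_lip G Lk n HG x y).
  eapply Rle_trans. apply Rabs_triang_inv2.
  unfold Rdiv. rewrite <- Rmult_minus_distr_r, Rabs_mult, (Rabs_right (/ t)).
  2: apply Rle_ge, Rlt_le, Rinv_0_lt_compat; lra.
  pose proof (Rinv_0_lt_compat t Ht).
  replace (sum_f_R0 Lk n * / t * Rabs (x - y)) with (sum_f_R0 Lk n * Rabs (x - y) * / t) by ring.
  apply Rmult_le_compat_r. lra. exact H.
Qed.

Lemma part4 al nu M : 0 < al < 1 -> 2 * INR nu > 1 / (1 - al) -> 1 <= M ->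
  limsup_at0_pinfty (fun t =>
       / (2 * M) * RInt (fun x => Rabs ((K al nu (x + t) - K al nu x) / t)) (- M) M).
Proof.
  intros Ha Hn HM C r Hr.
  destruct (params al nu Ha Hn) as (Hn1 & Haa & Hbb & Hab).
  pose proof (cc_pos al nu Hab) as Hc.
  destruct (big_pow (aa al nu * bb nu) (C * (2 * M) / cc al nu + 1) ltac:(lra)) as [N1 HN1].
  destruct (small_t nu r Hn1 Hr) as [N2 HN2].
  set (n := (N1 + N2)%nat).
  specialize (HN1 n ltac:(lia)). specialize (HN2 n ltac:(lia)).
  set (B := bb nu ^ n) in *.
  assert (HB : 0 < B) by (apply pow_lt; lra).
  set (t := IZR 1 / (2 * B)).
  assert (Ht : t = / (2 * B)) by (unfold t, Rdiv; ring).
  assert (Ht0 : 0 < t) by (rewrite Ht; apply Rinv_0_lt_compat; lra).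
  exists t. split. rewrite Rabs_right by lra. split; lra.
  set (g := fun x => Rabs ((K al nu (x + t) - K al nu x) / t)).
  destruct (g_lip al nu n Ha Hn) as [L HL].
  assert (Hex : forall u v, ex_RInt g u v) by (apply (lip_ex_RInt g L); exact HL).
  set (V := cc al nu * aa al nu ^ n * (2 * B)).
  assert (Hg0 : forall x, 0 <= g x) by (intros; apply Rabs_pos).
  assert (HgV : forall (j : nat) x, INR j / B <= x <= (INR j + /2) / B -> V <= g x).
  { intros j x Hx. unfold g, V.
    pose proof (core al nu n x (Z.of_nat j) 1 Ha Hn (or_introl eq_refl)) as Hc0.
    fold B t in Hc0. rewrite <- INR_IZR_INZ in Hc0.
    assert (INR j <= B * x <= INR j + /2).
    { split.
      - destruct Hx as [Hx _]. apply (Rmult_le_compat_l B) in Hx; [|lra]. replace (B * (INR j / B)) with (INR j) in Hx by (field; lra). lra.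
      - destruct Hx as [_ Hx]. apply (Rmult_le_compat_l B) in Hx; [|lra]. replace (B * ((INR j + / 2) / B)) with (INR j + /2) in Hx by (field; lra). lra. }
    assert (A1 : INR j <= B * x <= INR j + 1) by (split; lra).
    assert (A2 : INR j <= B * x + 1 / 2 <= INR j + 1) by (split; lra).
    specialize (Hc0 A1 A2).
    unfold Rdiv. rewrite Rabs_mult, Rabs_inv, (Rabs_right t) by lra. replace (/ t) with (2 * B) by (rewrite Ht, Rinv_inv; reflexivity). nra. }
  assert (Hcell : forall j : nat, V / (2 * B) <= RInt g (INR j / B) (INR (S j) / B)).
  { intros j. rewrite S_INR.
    rewrite <- (RInt_Chasles g (INR j / B) ((INR j + /2) / B) ((INR j + 1) / B)) by apply Hex.
    change plus with Rplus.
    assert (0 <= RInt g ((INR j + / 2) / B) ((INR j + 1) / B)).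
    { apply RInt_ge_0. apply Rmult_le_compat_r. left; apply Rinv_0_lt_compat; lra. lra.
      apply Hex. intros; apply Hg0. }
    assert (RInt (fun _ => V) (INR j / B) ((INR j + / 2) / B) <= RInt g (INR j / B) ((INR j + / 2) / B)).
    { apply RInt_le. apply Rmult_le_compat_r. left; apply Rinv_0_lt_compat; lra. lra.
      apply (@ex_RInt_const R_NormedModule). apply Hex. intros x Hx. apply (HgV j). lra. }
    rewrite RInt_const in H0. change scal with Rmult in H0. simpl in H0.
    replace (((INR j + / 2) / B - INR j / B) * V) with (V / (2 * B)) in H0 by (field; lra).
    lra. }
  assert (Hsum : forall j : nat, INR j * (V / (2 * B)) <= RInt g 0 (INR j / B)).
  { induction j as [|j IH].
    - simpl. replace (0 / B) with 0 by (field; lra). rewrite RInt_point. change zero with 0. lra.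
    - rewrite <- (RInt_Chasles g 0 (INR j / B) (INR (S j) / B)) by apply Hex.
      change plus with Rplus. pose proof (Hcell j).
      replace (INR (S j) * (V / (2 * B))) with (INR j * (V / (2 * B)) + V / (2 * B)) by (rewrite S_INR; ring). lra. }
  set (NB := (2 ^ (2 * nu * n))%nat).
  assert (HNB : INR NB = B) by (unfold NB, B; rewrite bbn_nat; reflexivity).
  specialize (Hsum NB). rewrite HNB in Hsum. replace (B / B) with 1 in Hsum by (field; lra).
  assert (E : RInt g (-M) M = RInt g (-M) 0 + (RInt g 0 1 + RInt g 1 M)).
  { pose proof (RInt_Chasles g 0 1 M (Hex _ _) (Hex _ _)). pose proof (RInt_Chasles g (-M) 0 M (Hex _ _) (Hex _ _)).
    change plus with Rplus in *. lra. }
  assert (0 <= RInt g (-M) 0) by (apply RInt_ge_0; [lra | apply Hex | intros; apply Hg0]).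
  assert (0 <= RInt g 1 M) by (apply RInt_ge_0; [lra | apply Hex | intros; apply Hg0]).
  fold g. rewrite E.
  assert (HV : B * (V / (2 * B)) = cc al nu * (aa al nu * bb nu) ^ n).
  { unfold V, B. rewrite Rpow_mult_distr. field. fold B. lra. }
  assert (cc al nu * (C * (2 * M) / cc al nu + 1) <= cc al nu * (aa al nu * bb nu) ^ n)
    by (apply Rmult_le_compat_l; lra).
  assert (cc al nu * (C * (2 * M) / cc al nu + 1) = C * (2 * M) + cc al nu) by (field; lra).
  assert (HF : C * (2 * M) < RInt g (- M) 0 + (RInt g 0 1 + RInt g 1 M)) by lra.
  apply (Rmult_lt_compat_l (/ (2 * M))) in HF. 2: apply Rinv_0_lt_compat; lra.
  replace (/ (2 * M) * (C * (2 * M))) with C in HF by (field; lra). exact HF.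
Qed.

Theorem corollary2 (alpha : R) (nu : nat)
  (Halpha : 0 < alpha < 1) (Hnu : 2 * INR nu > 1 / (1 - alpha)) :
  (forall x beta, alpha < beta <= 1 ->
     limsup_at0_pinfty (fun t => Rabs (K alpha nu (x + t) - K alpha nu x) / Rpower (Rabs t) beta))
  /\ (forall x beta, alpha < beta <= 1 -> ~ holder_at (K alpha nu) x beta)
  /\ (forall x, ~ ex_derive (K alpha nu) x)
  /\ (forall M, 1 <= M ->
     limsup_at0_pinfty (fun t =>
       / (2 * M) * RInt (fun x => Rabs ((K alpha nu (x + t) - K alpha nu x) / t)) (- M) M))
  /\ ~ locally_BV (K alpha nu).
Proof.
  split; [|split; [|split; [|split]]].
  - intros x beta Hb. apply part1; auto.
  - intros x beta Hb. apply part2; auto.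
  - intros x. apply part3; auto.
  - intros M HM. apply part4; auto.
  - apply part5; auto.
Qed.
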